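(* Let $\mathcal{A}$ be a bounded PTA, $s$ a symbolic state of $\mathcal{A}$, $x$ a clock, and $M(x)\in\mathbb{N}$ with $M(x)\ge \mathrm{maxC}^x(\mathcal{A})$. Let $\nu$ be a parameter valuation within the parameter domain, and let $(l,v)\in \nu(\mathrm{Ext}^x_{M(x)}(s))$ be a concrete state of $\nu(\mathcal{A})$. Then there exists a state $(l,v')\in\nu(s)$ such that $(l,v)$ and $(l,v')$ are bisimilar in $\nu(\mathcal{A})$.
   Context: A PTA is $\mathcal{A}=(\Sigma,L,l_0,L_F,X,P,\mathbb{D},I,E)$: finite actions $\Sigma$, finite locations $L$, initial $l_0$, accepting $L_F$, clocks $X$ (real-valued, $\ge0$), parameters $P$, parameter domain $\mathbb{D}(p)=(\mathbb{D}^-(p),\mathbb{D}^+(p))$ with admissible values $[\mathbb{D}^-(p),\mathbb{D}^+(p)]$, invariants $I(l)$ (clock guards), and edges $(l,g,a,R,l')$ with guard $g$ and reset set $R\subseteq X$. A simple clock guard is $x\bowtie\sum_i\alpha_ip_i+z$ with $\alpha_i,z\in\mathbb{Z}$, ${\bowtie}\in\{<,\le,=,\ge,>\}$; a clock guard is a conjunction of them. $\mathcal{A}$ is bounded if all $\mathbb{D}^\pm(p)$ are finite. $G^x(\mathcal{A})$ is the set of simple clock guards in which $x$ appears among the conjuncts of guards and invariants. For $g: x\bowtie\sum_i\alpha_ip_i+z$, $\mathrm{maxC}(g)=\sum_i\alpha_i\gamma_i+z$ with $\gamma_i=\mathbb{D}^-(p_i)$ if $\alpha_i<0$, $\mathbb{D}^+(p_i)$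 if $\alpha_i>0$, $0$ otherwise; $\mathrm{maxC}^x(\mathcal{A})=\max_{g\in G^x(\mathcal{A})}\mathrm{maxC}(g)$. For a parameter valuation $\nu$, $\nu(\mathcal{A})$ is the timed automaton obtained by substituting $\nu(p)$ for each $p$; its semantics is the transition system with states $(l,v)$ ($v$ a clock valuation satisfying $\nu(I(l))$), delay transitions $(l,v)\to(l,v+d)$ if all intermediate $(l,v+d')$, $d'\in[0,d]$, are states, and discrete transitions along edges $(l,g,a,R,l')$ from $(l,v)$ to $(l',v[R:=0])$ if $v$ satisfies $\nu(g)$ and both are states. Two states are bisimilar if they are related by a bisimulation of this labelled transition system (labels: delays $d$ and edges $e$). A symbolic state is a pair $(l,C)$ with $C$ a set of valuations of $X\cup P$; $\nu(s)=\{(l,v)\mid (v,\nu)\in C\}$. Cylindrification: $\mathrm{Cyl}_x(C)=\{w\mid\exists w'\in C,\ w'(y)=w(y)\ \forall y\ne x,\ w(x)\ge0\}$. $\mathrm{Ext}^x_M(C)=(C\cap(x\le M))\cup(\mathrm{Cyl}_x(C\cap(x>M))\cap(x>M))$, applied to a symbolic state via its constraint. *)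

(* Defs.v *)
From mathcomp Require Import all_boot.
From Stdlib Require Import Reals ZArith.

Set Implicit Arguments.
Unset Strict Implicit.
Unset Printing Implicit Defensive.

Local Open Scope R_scope.

Inductive cmp := CLt | CLe | CEq | CGe | CGt.

Definition cmp_sat (c : cmp) (a b : R) : Prop :=
  match c with
  | CLt => a < b | CLe => a <= b | CEq => a = b | CGe => a >= b | CGt => a > b
  end.

Section PTA.
Variables (Sigma L X P : finType).

Record sguard := SGuard {
  sg_clock : X;
  sg_op : cmp;
  sg_coef : P -> Z;
  sg_const : Z }.

Definition guard := seq sguard.

Record edge := Edge {
  e_src : L;
  e_guard : guard;
  e_act : Sigma;
  e_reset : seq X;
  e_tgt : L }.

(** Parameter domain bounds: [None] encodes -oo (lower) / +oo (upper). *)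
Record pta := PTA {
  p_init : L;
  p_acc : pred L;
  p_Dlo : P -> option R;
  p_Dhi : P -> option R;
  p_inv : L -> guard;
  p_edges : seq edge }.

Definition pta_bounded (A : pta) : Prop :=
  forall p, p_Dlo A p <> None /\ p_Dhi A p <> None.

Definition pta_admissible (A : pta) (nu : P -> R) : Prop :=
  forall p,
    (forall lo, p_Dlo A p = Some lo -> lo <= nu p) /\
    (forall hi, p_Dhi A p = Some hi -> nu p <= hi).

Definition lin_eval (a : P -> Z) (z : Z) (nu : P -> R) : R :=
  foldr (fun p acc => IZR (a p) * nu p + acc) (IZR z) (enum P).

Definition sguard_sat (nu : P -> R) (v : X -> R) (g : sguard) : Prop :=
  cmp_sat (sg_op g) (v (sg_clock g)) (lin_eval (sg_coef g) (sg_const g) nu).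

Definition guard_sat (nu : P -> R) (v : X -> R) (g : guard) : Prop :=
  forall sg, List.In sg g -> sguard_sat nu v sg.

(** maxC(g) = sum_i alpha_i gamma_i + z  (default 0 for an infinite bound,
    irrelevant under boundedness). *)
Definition gamma (A : pta) (a : P -> Z) (p : P) : R :=
  if (a p <? 0)%Z then odflt 0 (p_Dlo A p)
  else if (0 <? a p)%Z then odflt 0 (p_Dhi A p)
  else 0.

Definition maxC (A : pta) (g : sguard) : R :=
  foldr (fun p acc => IZR (sg_coef g p) * gamma A (sg_coef g) p + acc)
        (IZR (sg_const g)) (enum P).

Definition Gx (A : pta) (x : X) : seq sguard :=
  [seq g <- flatten ([seq p_inv A l | l <- enum L] ++ [seq e_guard e | e <- p_edges A])
   | sg_clock g == x].

(** maxC^x(A) = max over G^x(A); the max over an empty set is taken as 0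
    (harmless since M(x) is a natural number). *)
Definition maxCx (A : pta) (x : X) : R :=
  foldr Rmax 0 [seq maxC A g | g <- Gx A x].

Definition cstate : Type := (L * (X -> R))%type.

Definition is_state (A : pta) (nu : P -> R) (s : cstate) : Prop :=
  (forall x, 0 <= s.2 x) /\ guard_sat nu s.2 (p_inv A s.1).

Definition delay (v : X -> R) (d : R) : X -> R := fun x => v x + d.

Definition reset (v : X -> R) (Rs : seq X) : X -> R :=
  fun x => if x \in Rs then 0 else v x.

Inductive label := LDelay of R | LEdge of edge.

Definition step (A : pta) (nu : P -> R) (s : cstate) (lab : label) (s' : cstate)
  : Prop :=
  match lab with
  | LDelay d =>
      0 <= d /\ s'.1 = s.1 /\ s'.2 = delay s.2 d /\
      (forall d', 0 <= d' <= d -> is_state A nu (s.1, delay s.2 d'))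
  | LEdge e =>
      List.In e (p_edges A) /\ s.1 = e_src e /\ s'.1 = e_tgt e /\
      guard_sat nu s.2 (e_guard e) /\ s'.2 = reset s.2 (e_reset e) /\
      is_state A nu s /\ is_state A nu s'
  end.

Definition bisimulation (A : pta) (nu : P -> R) (Rel : cstate -> cstate -> Prop)
  : Prop :=
  forall s1 s2, Rel s1 s2 ->
    (forall lab s1', step A nu s1 lab s1' ->
       exists s2', step A nu s2 lab s2' /\ Rel s1' s2') /\
    (forall lab s2', step A nu s2 lab s2' ->
       exists s1', step A nu s1 lab s1' /\ Rel s1' s2').

Definition bisimilar (A : pta) (nu : P -> R) (s1 s2 : cstate) : Prop :=
  is_state A nu s1 /\ is_state A nu s2 /\
  exists Rel, bisimulation A nu Rel /\ Rel s1 s2.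

Definition constr : Type := (X -> R) -> (P -> R) -> Prop.

Record symstate := SymState { ss_loc : L; ss_constr : constr }.

Definition in_inst (nu : P -> R) (s : symstate) (c : cstate) : Prop :=
  c.1 = ss_loc s /\ ss_constr s c.2 nu.

Definition Cyl (x : X) (C : constr) : constr :=
  fun v nu => (exists v', C v' nu /\ (forall y, y != x -> v' y = v y)) /\ 0 <= v x.

Definition Ext (x : X) (M : R) (C : constr) : constr :=
  fun v nu =>
    (C v nu /\ v x <= M) \/
    (Cyl x (fun v' nu' => C v' nu' /\ v' x > M) v nu /\ v x > M).

Definition ExtS (x : X) (M : R) (s : symstate) : symstate :=
  SymState (ss_loc s) (Ext x M (ss_constr s)).

End PTA.

(* Main.v *)
Require Import Defs.
From mathcomp Require Import all_boot.
From Stdlib Require Import Reals ZArith Lra Lia Psatz.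
Local Open Scope R_scope.

Section Aux.
Variables (Sigma L X P : finType).
Set Implicit Arguments.

Definition relv (x : X) (M : R) (w1 w2 : X -> R) : Prop :=
  (forall y, y != x -> w1 y = w2 y) /\ (w1 x = w2 x \/ (w1 x > M /\ w2 x > M)).

Definition inA (A : pta Sigma L X P) (sg : sguard X P) : Prop :=
  (exists l, List.In sg (p_inv A l)) \/
  (exists e, List.In e (p_edges A) /\ List.In sg (e_guard e)).

Definition good (A : pta Sigma L X P) (nu : P -> R) (x : X) (M : R) : Prop :=
  forall sg, sg_clock sg = x -> inA A sg ->
    lin_eval (sg_coef sg) (sg_const sg) nu <= M.

Lemma relv_sym (x : X) M w1 w2 : relv x M w1 w2 -> relv x M w2 w1.
Proof.
move=> [H1 H2]; split.
- by move=> y Hy; rewrite H1.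
- case: H2 => [->|[]]; [left|right]; auto.
Qed.

Lemma sat_transfer {nu : P -> R} (x : X) M w1 w2 {sg : sguard X P} :
  (sg_clock sg = x -> lin_eval (sg_coef sg) (sg_const sg) nu <= M) ->
  relv x M w1 w2 -> sguard_sat nu w1 sg -> sguard_sat nu w2 sg.
Proof.
rewrite /sguard_sat => Hb [H1 H2].
case: (eqVneq (sg_clock sg) x) => Hc.
- have := Hb Hc; rewrite Hc.
  case: H2 => [->|[Ha Hb']] //.
  set c := lin_eval _ _ _ => Hcm.
  case: (sg_op sg) => /=; lra.
- by rewrite H1.
Qed.

Lemma guard_transfer (A : pta Sigma L X P) nu (x : X) M w1 w2 (g : guard X P) :
  good A nu x M -> (forall sg, List.In sg g -> inA A sg) ->
  relv x M w1 w2 -> guard_sat nu w1 g -> guard_sat nu w2 g.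
Proof.
move=> Hg Hin Hr Hs sg Hsg.
apply: (sat_transfer (sg:=sg) _ Hr (Hs _ Hsg)) => Hc.
exact: (Hg _ Hc (Hin _ Hsg)).
Qed.

Lemma state_transfer A nu x M l w1 w2 :
  0 <= M -> good A nu x M -> relv x M w1 w2 ->
  is_state A nu (l, w1) -> is_state A nu (l, w2).
Proof.
move=> HM Hg Hr [Hn Hi]; split => /=.
- move=> y; case: (eqVneq y x) => Hy.
  + subst y; case: Hr => _ [<-|[_ ?]]; [exact: Hn| lra].
  + by rewrite -(Hr.1 _ Hy); exact: Hn.
- apply: (guard_transfer Hg _ Hr Hi) => sg Hsg; left; by exists l.
Qed.

Definition Rel (x : X) (M : R) (s1 s2 : cstate L X) : Prop :=
  s1.1 = s2.1 /\ relv x M s1.2 s2.2.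

Lemma step_transfer A nu x M s1 s2 lab s1' :
  0 <= M -> good A nu x M -> Rel x M s1 s2 -> step A nu s1 lab s1' ->
  exists s2', step A nu s2 lab s2' /\ Rel x M s1' s2'.
Proof.
move=> HM Hg [Hl Hr]; case: lab => [d|e] /=.
- move=> [Hd [Hl1 [Hv Hst]]].
  have Hrd : forall d', 0 <= d' -> relv x M (delay s1.2 d') (delay s2.2 d').
    move=> d' Hd'; case: Hr => H1 H2; split.
    + by move=> y Hy; rewrite /delay H1.
    + rewrite /delay; case: H2 => [->|[? ?]]; [left|right]; auto; lra.
  exists (s2.1, delay s2.2 d); split.
  + split; first by []. split; first by []. split; first by [].
    move=> d' Hd'; rewrite -Hl; apply: (state_transfer HM Hg (Hrd d' _)).
    * lra.
    * exact: Hst.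
  + split; first by rewrite Hl1 Hl. by rewrite Hv; apply: Hrd.
- move=> [He [Hsrc [Htgt [Hgs [Hv [Hs1 Hs1']]]]]].
  have Hrr : relv x M (reset s1.2 (e_reset e)) (reset s2.2 (e_reset e)).
    case: Hr => H1 H2; split.
    + by move=> y Hy; rewrite /reset H1.
    + rewrite /reset; case: (x \in e_reset e); [left|] => //.
  exists (e_tgt e, reset s2.2 (e_reset e)); split.
  + split; first by []. split; first by rewrite -Hl. split; first by [].
    split.
    * apply: (guard_transfer Hg _ Hr Hgs) => sg Hsg; right; by exists e.
    split; first by [].
    split.
    * have -> : s2 = (s1.1, s2.2) by case: s2 Hl {Hrr Hr} => ? ? /= ->.
      have E1 : s1 = (s1.1, s1.2) by case: (s1).
      rewrite E1 in Hs1.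
      exact: (state_transfer HM Hg Hr Hs1).
    * case: s1' Hs1' Htgt Hv => l1' w1' /= Hs1' Htgt Hv.
      rewrite -Htgt; apply: (state_transfer HM Hg _ Hs1'); by rewrite Hv.
  + split; first by []. by rewrite Hv.
Qed.

Lemma Rel_bisim A nu x M : 0 <= M -> good A nu x M -> bisimulation A nu (Rel x M).
Proof.
move=> HM Hg s1 s2 HR; split.
- move=> lab s1' Hs; have H := step_transfer lab s1' HM Hg HR Hs; exact H.
- move=> lab s2' Hs.
  have HR' : Rel x M s2 s1 by case: HR => ? ?; split; [|apply: relv_sym].
  have [s1' [H1 H2]] := step_transfer lab s2' HM Hg HR' Hs.
  exists s1'; split => //; case: H2 => ? ?; split; [|apply: relv_sym]; auto.
Qed.

Lemma In_mem (T : eqType) (a : T) (s : seq T) : a \in s -> List.In a s.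
Proof.
elim: s => //= b s IH; rewrite in_cons => /orP [/eqP ->|H]; [left|right]; auto.
Qed.

Lemma In_map_seq (T U : Type) (f : T -> U) a (s : seq T) :
  List.In a s -> List.In (f a) (map f s).
Proof. elim: s => //= b s IH [->|H]; [left|right]; auto. Qed.

Lemma In_cat (T : Type) (a : T) (s1 s2 : seq T) :
  List.In a s1 \/ List.In a s2 -> List.In a (s1 ++ s2).
Proof.
elim: s1 => [|b s1 IH] /=; first by case.
case=> [[->|H]|H]; [left|right|right]; auto.
Qed.

Lemma In_flatten (T : Type) (a : T) (l : seq T) ls :
  List.In a l -> List.In l ls -> List.In a (flatten ls).
Proof.
move=> Ha; elim: ls => //= b ls IH [->|H]; apply: In_cat; auto.
Qed.

Lemma In_filter (T : Type) (p : pred T) a (s : seq T) :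
  List.In a s -> p a -> List.In a (filter p s).
Proof. elim: s => //= b s IH [->|H] Hp; [rewrite Hp; left|case: (p b); [right|]]; auto. Qed.

Lemma fold_max (T : Type) (f : T -> R) a (s : seq T) :
  List.In a s -> f a <= foldr Rmax 0 (map f s).
Proof.
elim: s => //= b s IH [->|H]; first exact: Rmax_l.
apply: Rle_trans (IH H) _; exact: Rmax_r.
Qed.

Lemma lin_le_maxC (A : pta Sigma L X P) nu (sg : sguard X P) :
  pta_bounded A -> pta_admissible A nu ->
  lin_eval (sg_coef sg) (sg_const sg) nu <= maxC A sg.
Proof.
move=> Hb Ha; rewrite /lin_eval /maxC.
elim: (enum P) => [|p ps IH] /=; first lra.
apply: Rplus_le_compat => //.
rewrite /gamma.
case: (Z.ltb_spec (sg_coef sg p) 0) => H1.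
- have := (Hb p).1; case E: (p_Dlo A p) => [lo|] // _ /=.
  have := (Ha p).1 lo E => Hlo.
  have : IZR (sg_coef sg p) < 0 by apply: IZR_lt.
  nra.
- case: (Z.ltb_spec 0 (sg_coef sg p)) => H2.
  + have := (Hb p).2; case E: (p_Dhi A p) => [hi|] // _ /=.
    have := (Ha p).2 hi E => Hhi.
    have : 0 < IZR (sg_coef sg p) by apply: IZR_lt.
    nra.
  + have -> : sg_coef sg p = 0%Z by lia. rewrite Rmult_0_l Rmult_0_l; lra.
Qed.

Lemma good_of (A : pta Sigma L X P) nu (x : X) (Mx : nat) :
  pta_bounded A -> maxCx A x <= INR Mx -> pta_admissible A nu ->
  good A nu x (INR Mx).
Proof.
move=> Hb Hm Ha sg Hc Hin.
apply: Rle_trans (lin_le_maxC _ Hb Ha) _.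
apply: Rle_trans Hm; rewrite /maxCx; apply: fold_max.
rewrite /Gx; apply: In_filter; last by rewrite Hc eqxx.
case: Hin => [[l Hl]|[e [He Hs]]].
- apply: (@In_flatten _ _ _ _ Hl); apply: In_cat; left.
  apply: In_map_seq; apply: In_mem; by rewrite mem_enum.
- apply: (@In_flatten _ _ _ _ Hs); apply: In_cat; right; exact: In_map_seq.
Qed.

End Aux.

Theorem mainTheorem3 (Sigma L X P : finType) (A : pta Sigma L X P)
  (s : symstate L X P) (x : X) (Mx : nat) (nu : P -> R) (l : L) (v : X -> R) :
  pta_bounded A ->
  maxCx A x <= INR Mx ->
  pta_admissible A nu ->
  in_inst nu (ExtS x (INR Mx) s) (l, v) ->
  is_state A nu (l, v) ->
  exists v', in_inst nu s (l, v') /\ bisimilar A nu (l, v) (l, v').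
Proof.
move=> Hb Hm Ha [/= Hl Hext] Hst.
have HM : 0 <= INR Mx by apply: pos_INR.
have Hg := good_of Mx Hb Hm Ha.
have Hbis := Rel_bisim HM Hg.
case: Hext => [[HC Hx]|[[[v' [[HC Hv'x] Hagree]] Hvx] Hgt]].
- exists v; split; first by split.
  split => //; split => //; exists (@Rel L X x (INR Mx)); split => //.
  split => //; split => //; by left.
- have Hr : @relv X x (INR Mx) v v'.
    split; first by move=> y Hy; rewrite Hagree.
    right; lra.
  exists v'; split; first by split.
  split => //; split; first exact: (state_transfer HM Hg Hr Hst).
  exists (@Rel L X x (INR Mx)); split => //.
Qed.
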